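(* Let $X=(V,E,T)$ be an $(s,k,K)$-two layer system, let $\lambda_{\operatorname{gr}}\ge0$ be such that the ground graph of $X$ is a $\lambda_{\operatorname{gr}}$-expander, and let $C\subseteq\mathbb{F}_p^V$ be a linear code modelled over $X$ ($p$ a prime power). Then for every $\underline{c}\in C\setminus\{\underline{0}\}$, $$\|\underline{c}\|\ge\frac{16}{s^4(s-1)^2k}\left(1-s(s-1)(k-1)\lambda_{\operatorname{gr}}\right).$$
   Context: An $(s,k,K)$-two layer system is a triple $X=(V,E,T)$ where: $V$ is a finite set; $E\subseteq 2^V$ with $|\tau|=k$ for all $\tau\in E$ and $\bigcup_{\tau\in E}\tau=V$; $T\subseteq 2^E$ with $|\sigma|=K$ for all $\sigma\in T$ and $\bigcup_{\sigma\in T}\sigma=E$. Write $v\in\sigma$ if $v\in\tau$ for some $\tau\in\sigma$; it is required that $2\le|\{\tau\in\sigma:v\in\tau\}|\le s$ for all $\sigma\in T$, $v\in\sigma$. A positive $w:T\to\mathbb{R}_{>0}$ is fixed and extended by $w(\tau)=\sum_{\sigma\ni\tau}w(\sigma)$ ($\tau\in E$), $w(v)=\sum_{\sigma\in T,v\in\sigma}w(\sigma)$, $w(B)=\sum_{\eta\in B}w(\eta)$. The ground graph has vertex set $V$, distinct $u,v$ adjacent iff some $\tau\in E$ contains both, with weight $\sum_{\tau\in E,u,v\in\tau}w(\tau)$. For a weighted graph $(V,E,m)$: $m(v)=\sum_{e\ni v}m(e)$, $m(U)=\sum_{v\in U}m(v)$, $m(U_1,U_2)=\sum_{(u_1,u_2)\in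 U_1\times U_2,\{u_1,u_2\}\in E}m(\{u_1,u_2\})$, $h_G=\min_{\emptyset\ne U\subsetneq V}\frac{m(U,V\setminus U)m(V)}{m(U)m(V\setminus U)}$; $G$ is a $\lambda$-expander if $1-h_G\le\lambda$. Codes: $\mathbb{F}_p$ is the field with $p$ elements; $\underline{e}\cdot\underline{c}=\sum_v\underline{e}(v)\underline{c}(v)$, $\operatorname{supp}(\underline{e})=\{v:\underline{e}(v)\neq0\}$. A linear code $C\subseteq\mathbb{F}_p^V$ is modelled over $X$ if there is $\mathcal{E}\subseteq\mathbb{F}_p^V$ with $C=\{\underline{c}:\underline{e}\cdot\underline{c}=0\ \forall\underline{e}\in\mathcal{E}\}$ such that $\underline{e}\mapsto\operatorname{supp}(\underline{e})$ is a bijection $\mathcal{E}\to E$, and a set $\mathcal{T}$ of linear dependencies (functions $\operatorname{ld}:\mathcal{E}\to\mathbb{F}_p$ with $\sum_{\underline{e}}\operatorname{ld}(\underline{e})(\underline{e}\cdot\underline{c})=0$ for all $\underline{c}$) with $T=\{\{\operatorname{supp}(\underline{e}):\operatorname{ld}(\underline{e})\ne0\}:\operatorname{ld}\in\mathcal{T}\}$. The norm is $\|\underline{c}\|=\frac1{w(V)}\sum_{v:\underline{c}(v)\neq0}w(v)$. *)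

(* Defs.v *)
From HB Require Import structures.
From mathcomp Require Import all_boot all_order all_algebra.
Set Implicit Arguments. Unset Strict Implicit. Unset Printing Implicit Defensive.
Import Order.TTheory GRing.Theory Num.Theory.
Local Open Scope ring_scope.

Section TwoLayer.
Variable V : finType.

Definition vin (sigma : {set {set V}}) (v : V) : bool :=
  [exists tau in sigma, v \in tau].

Definition two_layer_system (s k K : nat) (E : {set {set V}})
    (T : {set {set {set V}}}) : Prop :=
  [/\ (forall tau, tau \in E -> #|tau| = k),
      \bigcup_(tau in E) tau = [set: V],
      (forall sigma, sigma \in T -> sigma \subset E /\ #|sigma| = K),
      \bigcup_(sigma in T) sigma = E &
      (forall sigma v, sigma \in T -> vin sigma v ->
         (2 <= #|[set tau in sigma | v \in tau]| <= s)%N)].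

Variable R : realFieldType.

Definition wE (T : {set {set {set V}}}) (w : {set {set V}} -> R) (tau : {set V}) : R :=
  \sum_(sigma in T | tau \in sigma) w sigma.
Definition wV (T : {set {set {set V}}}) (w : {set {set V}} -> R) (v : V) : R :=
  \sum_(sigma in T | vin sigma v) w sigma.

Definition wg_deg (adj : rel V) (m : V -> V -> R) (v : V) : R :=
  \sum_(u | adj v u) m v u.
Definition wg_mass (adj : rel V) (m : V -> V -> R) (U : {set V}) : R :=
  \sum_(v in U) wg_deg adj m v.
Definition wg_cut (adj : rel V) (m : V -> V -> R) (U1 U2 : {set V}) : R :=
  \sum_(u1 in U1) \sum_(u2 in U2 | adj u1 u2) m u1 u2.
(* G is a lambda-expander iff 1 - h_G <= lambda, where h_G is the minimum over
   nonempty proper U of the ratio; unfolded as a bound on every ratio. *)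
Definition wg_expander (adj : rel V) (m : V -> V -> R) (lam : R) : Prop :=
  forall U : {set V}, U != set0 -> U != [set: V] ->
    1 - wg_cut adj m U (~: U) * wg_mass adj m [set: V]
          / (wg_mass adj m U * wg_mass adj m (~: U)) <= lam.

Definition ground_adj (E : {set {set V}}) : rel V :=
  fun u v => (u != v) && [exists tau in E, (u \in tau) && (v \in tau)].
Definition ground_w (E : {set {set V}}) (T : {set {set {set V}}})
    (w : {set {set V}} -> R) (u v : V) : R :=
  \sum_(tau in E | (u \in tau) && (v \in tau)) wE T w tau.

Definition wnorm (F : finFieldType) (T : {set {set {set V}}}) (w : {set {set V}} -> R)
    (c : {ffun V -> F}) : R :=
  (\sum_(v | c v != 0) wV T w v) / (\sum_v wV T w v).

End TwoLayer.

Section Codes.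
Variables (V : finType) (F : finFieldType).

Definition dotv (e c : {ffun V -> F}) : F := \sum_v e v * c v.
Definition supp (e : {ffun V -> F}) : {set V} := [set v | e v != 0].

Definition modelled_over (E : {set {set V}}) (T : {set {set {set V}}})
    (C : {set {ffun V -> F}}) : Prop :=
  exists (Ecal : {set {ffun V -> F}}) (Tcal : {set {ffun {ffun V -> F} -> F}}),
    [/\ C = [set c | [forall e in Ecal, dotv e c == 0]],
        {in Ecal &, injective supp},
        [set supp e | e in Ecal] = E,
        (forall ld : {ffun {ffun V -> F} -> F}, ld \in Tcal -> forall c : {ffun V -> F},
            \sum_(e in Ecal) ld e * dotv e c = 0) &
        T = [set [set supp e | e in Ecal & (ld : {ffun {ffun V -> F} -> F}) e != 0] | ld in Tcal]].

End Codes.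

(* Main.v *)
Require Import Defs.
From HB Require Import structures.
From mathcomp Require Import all_boot all_order all_algebra.
From mathcomp Require Import ring lra.
Import Order.TTheory GRing.Theory Num.Theory.
Local Open Scope ring_scope.


Lemma adj_sum (R : realFieldType) (V : finType) (E : {set {set V}})
  (T : {set {set {set V}}}) (w : {set {set V}} -> R) (u : V) (P : pred V) :
  \sum_(v | ground_adj E u v && P v) ground_w E T w u v
  = \sum_(v | (u != v) && P v) ground_w E T w u v.
Proof.
rewrite [LHS]big_mkcond [RHS]big_mkcond; apply: eq_bigr => v _.
rewrite /ground_adj; case: (u != v) => //=; case: (P v); rewrite ?andbF //=.
case: existsP => [//|Hn]; rewrite /ground_w big1 // => tau /andP [Ht Huv].
by case: Hn; exists tau; rewrite Ht.
Qed.

Lemma w_sum (R : realFieldType) (V : finType) (E : {set {set V}})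
  (T : {set {set {set V}}}) (w : {set {set V}} -> R) (u : V) (P : pred V) :
  \sum_(v | (u != v) && P v) ground_w E T w u v
  = \sum_(tau in E | u \in tau) wE T w tau *+ #|[set v | ((u != v) && P v) && (v \in tau)]|.
Proof.
rewrite /ground_w (exchange_big_dep (fun tau => (tau \in E) && (u \in tau))) /=; last first.
  by move=> v tau _ /andP [-> /andP [-> _]].
apply: eq_bigr => tau /andP [Ht Hu].
rewrite -sumr_const; apply: eq_bigl => v; rewrite inE Ht Hu /=.
by [].
Qed.

Lemma D_form (R : realFieldType) (V : finType) (E : {set {set V}})
  (T : {set {set {set V}}}) (w : {set {set V}} -> R) (v : V) :
  (forall sigma, sigma \in T -> sigma \subset E) ->
  \sum_(tau in E | v \in tau) wE T w tau
  = \sum_(sigma in T) w sigma *+ #|[set tau in sigma | v \in tau]|.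
Proof.
move=> HTE.
rewrite /wE (exchange_big_dep (fun sigma => sigma \in T)) /=; last first.
  by move=> tau sigma _ /andP [].
apply: eq_bigr => sigma Hs.
rewrite -sumr_const; apply: eq_bigl => tau; rewrite !inE Hs /=.
case Hts: (tau \in sigma); last by rewrite andbF.
by rewrite (subsetP (HTE _ Hs) _ Hts) andbT.
Qed.


Lemma deg_form (R : realFieldType) (V : finType) (E : {set {set V}})
  (T : {set {set {set V}}}) (w : {set {set V}} -> R) (k : nat) (u : V) :
  (forall tau, tau \in E -> #|tau| = k) ->
  wg_deg (ground_adj E) (ground_w E T w) u
  = (k%:R - 1) * \sum_(tau in E | u \in tau) wE T w tau.
Proof.
move=> HEk; rewrite /wg_deg.
rewrite (eq_bigl (fun v => ground_adj E u v && predT v)); last by move=> v; rewrite andbT.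
rewrite adj_sum w_sum mulr_sumr; apply: eq_bigr => tau /andP [Ht Hu].
have -> : [set v | (u != v) && predT v && (v \in tau)] = tau :\ u.
  by apply/setP => v; rewrite !inE andbT eq_sym.
have := cardsD1 u tau; rewrite Hu HEk // => ->.
by rewrite natrD addrC addKr mulr_natl.
Qed.

Lemma D_bounds (R : realFieldType) (V : finType) (E : {set {set V}})
  (T : {set {set {set V}}}) (w : {set {set V}} -> R) (s : nat) (v : V) :
  (forall sigma, sigma \in T -> sigma \subset E) ->
  (forall sigma v, sigma \in T -> vin sigma v ->
         (2 <= #|[set tau in sigma | v \in tau]| <= s)%N) ->
  (forall sigma, sigma \in T -> 0 < w sigma) ->
  2 * wV T w v <= \sum_(tau in E | v \in tau) wE T w tau /\
  \sum_(tau in E | v \in tau) wE T w tau <= s%:R * wV T w v.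
Proof.
move=> HTE Hs wpos; rewrite D_form //.
rewrite (bigID (fun sigma => vin sigma v)) /=.
rewrite [X in _ + X]big1 ?addr0; last first.
  move=> sigma /andP [_ Hn].
  have -> : [set tau in sigma | v \in tau] = set0.
    apply/setP => tau; rewrite !inE; apply/negbTE/negP => /andP [h1 h2].
    by move/negP: Hn; apply; apply/existsP; exists tau; rewrite h1 h2.
  by rewrite cards0.
rewrite /wV !mulr_sumr; split; apply: ler_sum => sigma /andP [HsT Hv];
  have /andP [h2 hs] := Hs _ _ HsT Hv; have w0 := ltW (wpos _ HsT).
  by rewrite mulr_natl; apply: ler_wpMn2l.
by rewrite mulr_natl; apply: ler_wpMn2l.
Qed.


Lemma factA (V : finType) (F : finFieldType) (Ecal : {set {ffun V -> F}})
  (c : {ffun V -> F}) (tau : {set V}) (u : V) :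
  (forall e, e \in Ecal -> dotv e c = 0) ->
  tau \in [set supp e | e in Ecal] -> u \in tau -> c u != 0 ->
  exists v, [&& v \in tau, u != v & c v != 0].
Proof.
move=> Hdot /imsetP [e He ->] Hu Hc.
case: (boolP [exists v, [&& v \in supp e, u != v & c v != 0]]) => [/existsP //|Hn].
exfalso; have := Hdot _ He; rewrite /dotv (bigD1 u) //= big1.
  rewrite addr0 => /eqP; rewrite mulf_eq0 (negbTE Hc) orbF.
  by move: Hu; rewrite inE => /negbTE ->.
move=> v Hvu; case: (boolP (c v == 0)) => [/eqP -> |Hcv]; first by rewrite mulr0.
case: (boolP (v \in supp e)) => [Hv|]; last by rewrite inE negbK => /eqP ->; rewrite mul0r.
by move/existsP: Hn; case; exists v; rewrite Hv eq_sym Hvu Hcv.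
Qed.

Lemma internal (R : realFieldType) (V : finType) (E : {set {set V}})
  (T : {set {set {set V}}}) (w : {set {set V}} -> R) (u : V) (S : {set V}) :
  (forall tau, 0 <= wE T w tau) ->
  (forall tau, tau \in E -> u \in tau -> exists v, [&& v \in tau, u != v & v \in S]) ->
  \sum_(tau in E | u \in tau) wE T w tau <=
  \sum_(v | ground_adj E u v && (v \in S)) ground_w E T w u v.
Proof.
move=> wE0 Hex; rewrite adj_sum w_sum; apply: ler_sum => tau /andP [Ht Hu].
rewrite -[X in X <= _]mulr1n; apply: ler_wpMn2l => //.
have [v /and3P [h1 h2 h3]] := Hex _ Ht Hu.
by apply/card_gt0P; exists v; rewrite !inE h1 h2 h3.
Qed.


Lemma numineq (R : realFieldType) (Sr Kr : R) : 2 <= Sr -> 2 <= Kr ->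
  16 * (Sr * (Kr - 1)) <= 2 * (Sr ^+ 4 * (Sr - 1) ^+ 2 * Kr).
Proof.
move=> hs hk.
have h3 : 8 <= Sr ^+ 3.
  have h2 : 4 <= Sr * Sr by nra.
  rewrite !exprS expr0 mulr1; nra.
have h1 : 1 <= (Sr - 1) ^+ 2 by rewrite !exprS expr0 mulr1; nra.
have hy : 8 <= Sr ^+ 3 * (Sr - 1) ^+ 2 by nra.
have -> : Sr ^+ 4 * (Sr - 1) ^+ 2 * Kr = Sr * Kr * (Sr ^+ 3 * (Sr - 1) ^+ 2).
  by rewrite exprS; ring.
move: hy; set Y := _ * _ ^+ 2 => hy.
have hsk : 0 <= Sr * Kr by nra.
nra.
Qed.

Theorem theorem8p1 (R : realFieldType) (V : finType) (s k K : nat)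
  (E : {set {set V}}) (T : {set {set {set V}}}) (w : {set {set V}} -> R)
  (lam : R) (F : finFieldType) (C : {set {ffun V -> F}}) :
  two_layer_system s k K E T ->
  (forall sigma, sigma \in T -> 0 < w sigma) ->
  0 <= lam ->
  wg_expander (ground_adj E) (ground_w E T w) lam ->
  modelled_over E T C ->
  forall c, c \in C -> c != 0 ->
    16 / (s%:R ^+ 4 * (s%:R - 1) ^+ 2 * k%:R)
      * (1 - s%:R * (s%:R - 1) * (k%:R - 1) * lam) <= wnorm T w c.
Proof.
move=> [HEk HEcov HT HTcov Hs] wpos lam0 Hexp [Ecal [Tcal [HC Hinj HE Hld HTdef]]] c cC c0.
have HTE : forall sigma, sigma \in T -> sigma \subset E by move=> sigma /HT [].
have Hdot : forall e, e \in Ecal -> dotv e c = 0.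
  move: cC; rewrite HC inE => /forall_inP H e He; apply/eqP; exact: H.
have wE0 : forall tau, 0 <= wE T w tau.
  by move=> tau; apply: sumr_ge0 => sigma /andP [h _]; exact: ltW (wpos _ h).
have wV0 : forall v, 0 <= wV T w v.
  by move=> v; apply: sumr_ge0 => sigma /andP [h _]; exact: ltW (wpos _ h).
set S := [set v | c v != 0].
have Hex : forall u, u \in S -> forall tau, tau \in E -> u \in tau ->
    exists v, [&& v \in tau, u != v & v \in S].
  move=> u; rewrite inE => Hu tau Ht Hut.
  rewrite -HE in Ht; have [v /and3P [h1 h2 h3]] := @factA _ _ _ _ _ _ Hdot Ht Hut Hu.
  by exists v; rewrite h1 h2 inE h3.
have [u0 Hu0] : exists u0, u0 \in S.
  apply/existsP; apply: contraNT c0 => /existsPn H; apply/eqP/ffunP => v.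
  by rewrite ffunE; apply/eqP; move: (H v); rewrite inE negbK.
have : u0 \in \bigcup_(tau in E) tau by rewrite HEcov inE.
move=> /bigcupP [tau0 Htau0 Hu0t].
have [v0 /and3P [Hv0t Hv0u Hv0S]] := Hex _ Hu0 _ Htau0 Hu0t.
have k2 : (2 <= k)%N.
  rewrite -(HEk _ Htau0); apply/card_gt1P; exists u0, v0; by rewrite Hu0t Hv0t.
have : tau0 \in \bigcup_(sigma in T) sigma by rewrite HTcov.
move=> /bigcupP [sigma0 Hsig0 Htsig0].
have Hvin : vin sigma0 u0 by apply/existsP; exists tau0; rewrite Htsig0 Hu0t.
have s2 : (2 <= s)%N.
  by have /andP [h1 h2] := Hs _ _ Hsig0 Hvin; apply: leq_trans h2.
have wVu0 : 0 < wV T w u0.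
  rewrite /wV (bigD1 sigma0) /=; last by rewrite Hsig0 Hvin.
  apply: (lt_le_trans (wpos _ Hsig0)); rewrite lerDl.
  by apply: sumr_ge0 => sigma /andP [/andP [h _] _]; exact: ltW (wpos _ h).
set D := fun v => \sum_(tau in E | v \in tau) wE T w tau.
have HD : forall v, 2 * wV T w v <= D v /\ D v <= s%:R * wV T w v.
  by move=> v; apply: D_bounds.
have D0 : forall v, 0 <= D v.
  by move=> v; apply: sumr_ge0 => tau _; exact: wE0.
set A := \sum_(v in S) wV T w v.
set B := \sum_v wV T w v.
have -> : wnorm T w c = A / B.
  by rewrite /wnorm /A /B; congr (_ / _); apply: eq_bigl => v; rewrite inE.
set a := \sum_(v in S) D v.
set b := \sum_(v in ~: S) D v.
have HA : a <= s%:R * A.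
  by rewrite /a /A mulr_sumr; apply: ler_sum => v _; case: (HD v).
have Hab : \sum_v D v = a + b.
  rewrite (bigID (fun v => v \in S)) /=; congr (_ + _).
  by apply: eq_bigl => v; rewrite in_setC.
have HB : 2 * B <= a + b.
  by rewrite -Hab /B mulr_sumr; apply: ler_sum => v _; case: (HD v).
have Ha0 : 0 < a.
  rewrite /a (bigD1 u0) //=.
  have [h _] := HD u0.
  have : 0 <= \sum_(i in S | i != u0) D i by apply: sumr_ge0 => v _; exact: D0.
  lra.
have Hb0 : 0 <= b by apply: sumr_ge0 => v _; exact: D0.
have HA0 : 0 <= A by apply: sumr_ge0 => v _; exact: wV0.
have HAB : A <= B.
  rewrite /B (bigID (fun v => v \in S)) /= lerDl.
  by apply: sumr_ge0 => v _; exact: wV0.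
have HAp : 0 < A.
  rewrite /A (bigD1 u0) //=; apply: (lt_le_trans wVu0); rewrite lerDl.
  by apply: sumr_ge0 => v _; exact: wV0.
have HBp : 0 < B by apply: lt_le_trans HAB.
set K1 := (k%:R - 1 : R).
have HK1 : 1 <= K1.
  by rewrite /K1 lerBrDr; have := k2; rewrite -(ler_nat R) => h; lra.
have massE : forall U, wg_mass (ground_adj E) (ground_w E T w) U = K1 * \sum_(v in U) D v.
  move=> U; rewrite /wg_mass mulr_sumr; apply: eq_bigr => v _.
  by apply: deg_form.
have Hkey : (a + b) * (1 - lam * K1) <= a * K1.
  case: (eqVneq b 0) => [b0|bn0].
    rewrite b0 addr0.
    have h1 : 0 <= a * (lam * K1) by rewrite !mulr_ge0 // ?(ltW Ha0) //; lra.
    nra.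
  have bp : 0 < b by rewrite lt_def bn0.
  have SnT : S != [set: V].
    apply: contra bn0 => /eqP ST; rewrite /b ST setCT big_set0.
    by [].
  have Sn0 : S != set0 by apply/set0Pn; exists u0.
  have := Hexp S Sn0 SnT.
  rewrite !massE.
  have -> : \sum_(v in [set: V]) D v = a + b.
    by rewrite -Hab; apply: eq_bigl => v; rewrite in_setT.
  rewrite -/a -/b.
  set cut := wg_cut _ _ _ _.
  have cut0 : 0 <= cut.
    apply: sumr_ge0 => u _; apply: sumr_ge0 => v _; apply: sumr_ge0 => tau _.
    exact: wE0.
  have Hmass : wg_mass (ground_adj E) (ground_w E T w) S =
     \sum_(u in S) \sum_(v | ground_adj E u v && (v \in S)) ground_w E T w u v + cut.
    rewrite /wg_mass /cut /wg_cut -big_split; apply: eq_bigr => u _.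
    rewrite /wg_deg (bigID (fun v => v \in S)) /=; congr (_ + _).
    by apply: eq_bigl => v; rewrite in_setC andbC.
  have Hin : a <= \sum_(u in S) \sum_(v | ground_adj E u v && (v \in S)) ground_w E T w u v.
    apply: ler_sum => u Hu; apply: internal => //; exact: Hex.
  have Hcut : cut + a <= K1 * a.
    rewrite -massE Hmass addrC lerD2r //.
  move=> Hx.
  have Hy : (1 - lam) * ((K1 * a) * (K1 * b)) <= cut * (K1 * (a + b)).
    rewrite -ler_pdivlMr; first by lra.
    by apply: mulr_gt0; nra.
  have Hz : (K1 * a) * (K1 * b * (1 - lam)) <= (K1 * a) * ((K1 - 1) * (a + b)).
    have : cut * (K1 * (a + b)) <= (K1 * a - a) * (K1 * (a + b)).
      apply: ler_wpM2r; nra.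
    nra.
  rewrite ler_pM2l in Hz; last by nra.
  nra.
have Sr2 : 2 <= (s%:R : R) by rewrite (ler_nat R 2 s).
have Kr2 : 2 <= (k%:R : R) by rewrite (ler_nat R 2 k).
set Sr := (s%:R : R) in Sr2 HA *.
set P := Sr ^+ 4 * (Sr - 1) ^+ 2 * k%:R.
have hc : 16 / P <= 2 / (Sr * K1).
  have Pp : 0 < P by rewrite /P !mulr_gt0 ?exprn_gt0 //; lra.
  rewrite ler_pdivrMr // mulrAC ler_pdivlMr; last by apply: mulr_gt0; lra.
  exact: numineq.
set cc0 := 16 / P in hc *.
have cc00 : 0 <= cc0.
  by rewrite /cc0 divr_ge0 // /P !mulr_ge0 ?exprn_ge0 //; lra.
set t := 1 - _.
case: (lerP t 0) => ht.
  apply: (@le_trans _ _ 0); first by rewrite mulr_ge0_le0.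
  by rewrite divr_ge0 // ltW.
rewrite ler_pdivlMr //.
set q := (Sr * K1)^-1 in hc *.
have hq : q * (Sr * K1) = 1 by rewrite mulVf //; apply/lt0r_neq0/mulr_gt0; lra.
have q0 : 0 <= q by rewrite /q invr_ge0 mulr_ge0 //; lra.
have ht2 : t <= 1 - lam * K1.
  have : 0 <= (Sr * (Sr - 1) - 1) * (K1 * lam) by rewrite mulr_ge0 //; nra.
  rewrite /t; nra.
have tB : 0 <= t * B by rewrite mulr_ge0 // ltW.
have qt : 0 <= q * t by rewrite mulr_ge0 // ltW.
have h1 : 0 <= (2 * q - cc0) * (t * B) by rewrite mulr_ge0 //; lra.
have h2 : 0 <= (a + b - 2 * B) * (q * t) by rewrite mulr_ge0 //; lra.
have h3 : 0 <= (a + b) * (1 - lam * K1 - t) by rewrite mulr_ge0 //; lra.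
have h4 : 0 <= q * (a * K1 - (a + b) * t) by rewrite mulr_ge0 //; nra.
have h5 : 0 <= (q * K1) * (Sr * A - a) by rewrite mulr_ge0 //; [nra | lra].
have h6 : q * K1 * Sr = 1 by rewrite -hq; ring.
nra.
Qed.
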